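(* Consider the uplink system and problem in the context, with the antenna-moving-region constraints $0\le x_m\le x_{\max}$, $0\le y_n\le y_{\max}$ omitted, and suppose each user has a single channel path. If $K(K-1)/2\le I_M+I_N$, where $I_M$ and $I_N$ denote the total number of prime factors (counted with multiplicity) of $M$ and $N$ respectively, then the lower bound $p_k\ge\bar p_k:=\frac{\sigma^2(2^{r_k}-1)}{MN|b_k|^2}$ ($1\le k\le K$) valid for all feasible points is tight: there exist feasible $(\mathbf{x},\mathbf{y},\mathbf{W},\mathbf{p})$ with $p_k=\bar p_k$ for all $k$ (so the minimum total transmit power equals $\sum_k\bar p_k$).
   Context: A base station has a cross-linked movable antenna array with $M$ columns and $N$ rows; horizontal APV $\mathbf{x}=[x_1,\dots,x_M]^{\mathrm T}\in\mathbb{R}^M$, vertical APV $\mathbf{y}=[y_1,\dots,y_N]^{\mathrm T}\in\mathbb{R}^N$, antenna $(m,n)$ at $(x_m,y_n)$. $K$ single-antenna users; user $k$ has a single path with complex coefficient $b_k\ne0$ and virtual angles $\vartheta_k,\varphi_k\in[-1,1]$, where different users have distinct virtual angles: $\vartheta_k\ne\vartheta_q$ and $\varphi_k\ne\varphi_q$ for $k\ne q$. With wavelength $\lambda>0$, the channel is $\mathbf{h}_k(\mathbf{x},\mathbf{y})=b_k\,\mathbf{a}^{\mathrm{hor}}_k(\mathbf{x})\otimes\mathbf{a}^{\mathrm{ver}}_k(\mathbf{y})$, with $\mathbf{a}^{\mathrm{hor}}_k(\mathbf{x})=[e^{-\mathrm{j}\frac{2\pi}{\lambda}x_m\vartheta_k}]_{m=1}^M$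 and $\mathbf{a}^{\mathrm{ver}}_k(\mathbf{y})=[e^{-\mathrm{j}\frac{2\pi}{\lambda}y_n\varphi_k}]_{n=1}^N$. With combining matrix $\mathbf{W}=[\mathbf{w}_1,\dots,\mathbf{w}_K]\in\mathbb{C}^{MN\times K}$, powers $p_k$, noise power $\sigma^2>0$, the SINR of user $k$ is $\gamma_k=\frac{|\mathbf{w}_k^{\mathrm H}\mathbf{h}_k|^2p_k}{\sum_{q\ne k}|\mathbf{w}_k^{\mathrm H}\mathbf{h}_q|^2p_q+\|\mathbf{w}_k\|_2^2\sigma^2}$. Feasibility means: $\log_2(1+\gamma_k)\ge r_k$, $p_k\ge0$ for all $k$ (given $r_k\ge0$), $x_{m+1}-x_m\ge d_{\min,x}$ for $1\le m\le M-1$, $y_{n+1}-y_n\ge d_{\min,y}$ for $1\le n\le N-1$, with given $d_{\min,x},d_{\min,y}>0$. The objective is to minimize $\sum_k p_k$. *)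

(* Defs.v *)
From mathcomp Require Import all_boot all_order all_algebra.
From mathcomp Require Export complex.
From mathcomp Require Export reals trigo exp.
Set Implicit Arguments. Unset Strict Implicit. Unset Printing Implicit Defensive.
Import Order.TTheory GRing.Theory Num.Theory.
Local Open Scope ring_scope.
Local Open Scope complex_scope.

Definition bigomega (n : nat) : nat := \sum_(p <- primes n) logn p n.

Section Model.
Variable R : realType.

Definition expj (t : R) : R[i] := (cos t +i* sin t).

Definition cabs2 (z : R[i]) : R := complex.Re z ^+ 2 + complex.Im z ^+ 2.

Variables (M N K : nat).

Definition a_hor (lambda : R) (x : 'I_M -> R) (th : R) : 'cV[R[i]]_M :=
  \col_m expj (- (2 * pi / lambda) * x m * th).
Definition a_ver (lambda : R) (y : 'I_N -> R) (ph : R) : 'cV[R[i]]_N :=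
  \col_n expj (- (2 * pi / lambda) * y n * ph).

(* Kronecker product u (x) v of column vectors, in the standard ordering:
   entry (m,n) sits at index mxvec_index m n = m * N + n. *)
Definition kron_cV (u : 'cV[R[i]]_M) (v : 'cV[R[i]]_N) : 'cV[R[i]]_(M * N) :=
  (mxvec (\matrix_(m < M, n < N) (u m 0 * v n 0)))^T.

Definition chan (lambda : R) (b : 'I_K -> R[i]) (th ph : 'I_K -> R)
  (x : 'I_M -> R) (y : 'I_N -> R) (k : 'I_K) : 'cV[R[i]]_(M * N) :=
  b k *: kron_cV (a_hor lambda x (th k)) (a_ver lambda y (ph k)).

Definition herm_ip (w h : 'cV[R[i]]_(M * N)) : R[i] :=
  \sum_i (w i 0)^* * h i 0.

Definition norm2sq (w : 'cV[R[i]]_(M * N)) : R := \sum_i cabs2 (w i 0).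

Definition sinr (lambda sigma2 : R) (b : 'I_K -> R[i]) (th ph : 'I_K -> R)
  (x : 'I_M -> R) (y : 'I_N -> R) (W : 'M[R[i]]_(M * N, K)) (p : 'I_K -> R)
  (k : 'I_K) : R :=
  let h := chan lambda b th ph x y in
  cabs2 (herm_ip (col k W) (h k)) * p k /
  (\sum_(q < K | q != k) cabs2 (herm_ip (col k W) (h q)) * p q
   + norm2sq (col k W) * sigma2).

Definition log2 (t : R) : R := ln t / ln 2.

Definition feasible (lambda sigma2 dminx dminy : R) (b : 'I_K -> R[i])
  (th ph : 'I_K -> R) (r : 'I_K -> R)
  (x : 'I_M -> R) (y : 'I_N -> R) (W : 'M[R[i]]_(M * N, K)) (p : 'I_K -> R)
  : Prop :=
  [/\ (forall k, log2 (1 + sinr lambda sigma2 b th ph x y W p k) >= r k),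
      (forall k, 0 <= p k),
      (forall (m : 'I_M) (hm : (m.+1 < M)%N), x (Ordinal hm) - x m >= dminx) &
      (forall (n : 'I_N) (hn : (n.+1 < N)%N), y (Ordinal hn) - y n >= dminy)].

Definition pbar (sigma2 : R) (b : 'I_K -> R[i]) (r : 'I_K -> R) (k : 'I_K) : R :=
  sigma2 * (2 `^ (r k) - 1) / ((M * N)%:R * cabs2 (b k)).

End Model.

(* Main.v *)
Require Import Defs.
From mathcomp Require Import all_boot all_order all_algebra.
From mathcomp Require Import complex reals trigo exp.
From mathcomp Require Import ring lra.
From mathcomp Require Import sequences.
Import Order.TTheory GRing.Theory Num.Theory.
Local Open Scope ring_scope.
Local Open Scope complex_scope.

Section A.
Variable R : realType.
Implicit Types a b : R.

Lemma expjD a b : expj (a + b) = expj a * expj b.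
Proof. rewrite /expj; simpc; rewrite cosD sinD; congr (_ +i* _); lra. Qed.

Lemma expj0 : expj (0 : R) = 1.
Proof. by rewrite /expj cos0 sin0. Qed.

Lemma conj_expj a : (expj a)^* = expj (- a).
Proof. by rewrite /expj cosN sinN. Qed.

Lemma expjn (n : nat) a : expj (n%:R * a) = expj a ^+ n.
Proof.
elim: n => [|n IH]; first by rewrite mul0r expj0 expr0.
by rewrite -natr1 mulrDl mul1r expjD IH exprSr.
Qed.

Lemma cabs2M (z w : R[i]) : cabs2 (z * w) = cabs2 z * cabs2 w.
Proof. case: z => a b; case: w => c d; rewrite /cabs2; simpc => /=. lra. Qed.

Lemma cabs2_expj a : cabs2 (expj a) = 1.
Proof. by rewrite /cabs2 /= cos2Dsin2. Qed.

Lemma cabs2_real (t : R) : cabs2 (t%:C) = t ^+ 2.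
Proof. by rewrite /cabs2 /= expr0n /= addr0. Qed.

Lemma cabs2_ge0 (z : R[i]) : 0 <= cabs2 z.
Proof. by rewrite /cabs2 addr_ge0 // sqr_ge0. Qed.

Lemma ReD (z w : R[i]) : complex.Re (z + w) = complex.Re z + complex.Re w.
Proof. by case: z; case: w. Qed.
Lemma ImD (z w : R[i]) : complex.Im (z + w) = complex.Im z + complex.Im w.
Proof. by case: z; case: w. Qed.

Lemma Re_sum (I : Type) (r : seq I) (P : pred I) (F : I -> R[i]) :
  complex.Re (\sum_(i <- r | P i) F i) = \sum_(i <- r | P i) complex.Re (F i).
Proof. exact: (big_morph _ ReD). Qed.
Lemma Im_sum (I : Type) (r : seq I) (P : pred I) (F : I -> R[i]) :
  complex.Im (\sum_(i <- r | P i) F i) = \sum_(i <- r | P i) complex.Im (F i).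
Proof. exact: (big_morph _ ImD). Qed.

Lemma numconjE (z : R[i]) : Num.conj z = conjc z.
Proof. reflexivity. Qed.

Lemma conj_mul_self (z : R[i]) : conjc z * z = (cabs2 z)%:C.
Proof. case: z => a b; rewrite /cabs2; simpc => /=; congr (_ +i* _); lra. Qed.

Lemma cos2pin (n : nat) : cos ((pi *+ 2) *+ n) = 1 :> R.
Proof. by have := periodicn (@cosD2pi R) n 0; rewrite add0r cos0. Qed.
Lemma sin2pin (n : nat) : sin ((pi *+ 2) *+ n) = 0 :> R.
Proof. by have := periodicn (@sinD2pi R) n 0; rewrite add0r sin0. Qed.

Lemma pm1_cases (e : R) : e = 1 \/ e = -1 -> forall x : R,
  cos (e * x) = cos x /\ sin (e * x) = e * sin x.
Proof. by case=> ->; move=> x; rewrite ?mul1r ?mulN1r ?cosN ?sinN. Qed.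

Lemma geo0 (f t : nat) (e : R) : (2 <= f)%N -> (e = 1 \/ e = -1) ->
  \sum_(i < f) expj (i%:R * (e * (pi *+ 2) * (1 + f * t)%:R / f%:R)) = 0.
Proof.
move=> f2 he.
have fpos : (0 : R) < f%:R by rewrite ltr0n; case: f f2.
set th := (e * _ * _ / _).
under eq_bigr do rewrite expjn.
have zf : expj th ^+ f = 1.
  rewrite -expjn /th mulrC -!mulrA mulVf ?gt_eqF // mulr1 mulr_natr.
  have [hc hs] := pm1_cases _ he ((pi *+ 2) *+ (1 + f * t)); rewrite /expj hc hs.
  by rewrite cos2pin sin2pin mulr0.
have zn1 : expj th != 1.
  have thE : th = e * (pi *+ 2 / f%:R + (pi *+ 2) *+ t).
    rewrite /th natrD natrM -!mulrA; congr (_ * _).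
    rewrite [(1 + _) / _]mulrDl [_ * (_ + _)]mulrDr mul1r; congr (_ + _).
    by rewrite (mulrC f%:R) mulfK ?gt_eqF // mulr_natr.
  apply/negP => /eqP/(congr1 (@complex.Re R)) /=.
  rewrite thE; have [-> _] := pm1_cases _ he (pi *+ 2 / f%:R + (pi *+ 2) *+ t).
  rewrite (periodicn (@cosD2pi R)) => hc.
  have pi0 := pi_gt0 R.
  have h0 : 0 < pi *+ 2 / f%:R :> R by rewrite divr_gt0 // mulrn_wgt0.
  have : cos (pi *+ 2 / f%:R) < cos 0 :> R.
    have hf : pi *+ 2 / f%:R <= pi :> R.
      by rewrite ler_pdivrMr // -[pi *+ 2]mulr_natr ler_pM2l // ler_nat.
    have := @ltr_cos R 0 (pi *+ 2 / f%:R).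
    rewrite !in_itv /= lexx (ltW pi0) (ltW h0) hf => /(_ isT isT) /= ->.
    exact: h0.
  by rewrite hc cos0 ltxx.
apply/eqP; move: zn1; rewrite -subr_eq0 => /negPf zn1.
by have := subrX1 (expj th) f; rewrite zf subrr => /esym/eqP; rewrite mulf_eq0 zn1.
Qed.
End A.
Section B.
Variable R : realType.

Definition prodf (s : seq (nat * R)) : nat := \prod_(p <- s) p.1.

Fixpoint pos (s : seq (nat * R)) (m : nat) : R :=
  if s is p :: s' then (m %/ prodf s')%N%:R * p.2 + pos s' (m %% prodf s')%N else 0.

Lemma prodf_cons p s : prodf (p :: s) = (p.1 * prodf s)%N.
Proof. by rewrite /prodf big_cons. Qed.

Lemma prodf_gt0 s : (forall p, p \in s -> 0 < p.1)%N -> (0 < prodf s)%N.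
Proof.
elim: s => [|p s IH] H; first by rewrite /prodf big_nil.
rewrite prodf_cons muln_gt0 H ?mem_head ?IH // => q qs.
by apply: H; rewrite inE qs orbT.
Qed.

Lemma pos0 s : pos s 0 = 0.
Proof. by elim: s => [|p s IH] //=; rewrite div0n mod0n IH mul0r addr0. Qed.

Lemma sum_divmod (P f : nat) (F G : nat -> R[i]) : (0 < P)%N ->
  \sum_(0 <= m < f * P) F (m %/ P)%N * G (m %% P)%N =
  (\sum_(0 <= i < f) F i) * (\sum_(0 <= j < P) G j).
Proof.
move=> P0; elim: f => [|f IH]; first by rewrite mul0n big_geq // big_geq // mul0r.
rewrite mulSn addnC (big_cat_nat (leq0n (f * P)) (leq_addr P (f * P))) /= IH.
rewrite big_nat_recr //= mulrDl; congr (_ + _).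
rewrite -{1}(add0n (f * P)%N) big_addn addKn mulr_sumr.
apply: eq_big_nat => j /andP[_ jP].
by rewrite [(j + _)%N]addnC divnMDl // divn_small // addn0 modnMDl modn_small.
Qed.

Definition asum (al : R) (s : seq (nat * R)) : R[i] :=
  \sum_(0 <= m < prodf s) expj (al * pos s m).

Definition slot (al : R) (f : nat) (D : R) : R[i] :=
  \sum_(0 <= i < f) expj (al * (i%:R * D)).

Lemma asum_cons al f D s : (0 < prodf s)%N ->
  asum al ((f, D) :: s) = slot al f D * asum al s.
Proof.
move=> P0; rewrite /asum prodf_cons /= -sum_divmod //.
by apply: eq_bigr => m _; rewrite mulrDr expjD.
Qed.

Lemma asum0 al s f D : (forall p, p \in s -> 0 < p.1)%N ->
  (f, D) \in s -> slot al f D = 0 -> asum al s = 0.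
Proof.
elim: s => [|[f' D'] s IH] // H; rewrite inE => /orP[/eqP [-> ->] h0|fs h0].
  by rewrite asum_cons ?h0 ?mul0r // prodf_gt0 // => q qs; apply: H; rewrite inE qs orbT.
rewrite asum_cons ?IH ?mulr0 // => [q qs|]; first by apply: H; rewrite inE qs orbT.
by apply: prodf_gt0 => q qs; apply: H; rewrite inE qs orbT.
Qed.

End B.
Arguments prodf {R} s.
Arguments pos {R} s m.
Arguments asum {R} al s.
Arguments slot {R} al f D.

Section C.
Variable R : realType.

Lemma prodf_map (s : seq (nat * R)) : prodf s = \prod_(x <- map fst s) x.
Proof. by rewrite /prodf big_map. Qed.

Lemma build (lam g : R) (inp : seq (nat * R)) : 0 < lam -> 0 < g ->
  (forall p, p \in inp -> (0 < p.1)%N /\ p.2 != 0) ->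
  exists s : seq (nat * R),
   [/\ map fst s = map fst inp,
       (forall p, p \in inp -> exists t : nat,
          (p.1, lam / (p.1%:R * `|p.2|) * (1 + p.1 * t)%N%:R) \in s) &
       (forall m, (m.+1 < prodf s)%N -> g <= pos s m.+1 - pos s m)].
Proof.
move=> lam0 g0; elim: inp => [|[f Dl] rest IH] H.
  by exists [::]; split => // m; rewrite /prodf big_nil.
have [|s [hmap hmem hgap]] := IH.
  by move=> p pr; apply: H; rewrite inE pr orbT.
have [/= f0 Dl0] := H (f, Dl) (mem_head _ _).
have P0 : (0 < prodf s)%N.
  rewrite prodf_map hmap -prodf_map; apply: prodf_gt0 => p pr.
  by have [] := H p; rewrite // inE pr orbT.
set P := prodf s in P0 hgap *.
set S := pos s P.-1.
set a := `|Dl|.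
have a0 : 0 < a by rewrite normr_gt0.
set t := (Num.truncn ((S + g) * a / lam)).+1.
set D := lam / (f%:R * a) * (1 + f * t)%N%:R.
have DS : S + g <= D.
  have ht : (S + g) * a / lam < t%:R by exact: Num.Theory.truncnS_gt.
  rewrite ltr_pdivrMr // in ht.
  have fR : 1 <= f%:R :> R by rewrite ler1n.
  rewrite /D mulrAC ler_pdivlMr ?mulr_gt0 // ?(lt_le_trans ltr01 fR) //.
  rewrite natrD natrM; nra.
exists ((f, D) :: s); split.
- by rewrite /= hmap.
- move=> p; rewrite inE => /orP[/eqP -> | pr]; first by exists t; rewrite mem_head.
  by have [t' ht'] := hmem p pr; exists t'; rewrite inE ht' orbT.
move=> m; rewrite prodf_cons /= -/P => hm.
have := divn_eq m P; have := ltn_pmod m P0.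
move: (m %/ P)%N (m %% P)%N => q r rP ->.
have e0 : ((q * P + r) %/ P)%N = q by rewrite divnMDl // divn_small // addn0.
have e1 : ((q * P + r) %% P)%N = r by rewrite modnMDl modn_small.

case: (ltnP r.+1 P) => hr.
  rewrite -addnS divnMDl // divn_small // addn0 modnMDl modn_small //.
  have := hgap r hr; lra.
have rE : r.+1 = P by apply/eqP; rewrite eqn_leq hr rP.
rewrite -addnS rE -mulSnr mulnK // modnMl pos0.
have -> : r = P.-1 by rewrite -rE.
rewrite -/S -natr1; lra.
Qed.

End C.
Section D.
Variable R : realType.
Variables M N : nat.

Lemma kron_ip (u u' : 'cV[R[i]]_M) (v v' : 'cV[R[i]]_N) :
  herm_ip (kron_cV u v) (kron_cV u' v') =
  (\sum_m (u m 0)^* * u' m 0) * (\sum_n (v n 0)^* * v' n 0).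
Proof.
rewrite /herm_ip (reindex _ (curry_mxvec_bij _ _)) /=.
rewrite big_distrlr pair_bigA /=; apply: eq_bigr => [[m n]] _ /=.
rewrite /kron_cV !mxE !mxvecE !mxE rmorphM /=; ring.
Qed.

Lemma herm_ipZ (a c : R[i]) (w w' : 'cV[R[i]]_(M * N)) :
  herm_ip (a *: w) (c *: w') = a^* * c * herm_ip w w'.
Proof.
rewrite /herm_ip mulr_sumr; apply: eq_bigr => i _; rewrite !mxE rmorphM /=; ring.
Qed.

Lemma ip_self (w : 'cV[R[i]]_(M * N)) : herm_ip w w = (norm2sq w)%:C.
Proof.
rewrite /herm_ip /norm2sq rmorph_sum; apply: eq_bigr => i _.
by rewrite numconjE conj_mul_self.
Qed.

Lemma ahor_cross (lam : R) (x : 'I_M -> R) (a b : R) :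
  \sum_m ((a_hor lam x a) m 0)^* * (a_hor lam x b) m 0 =
  \sum_m expj ((2 * pi / lam) * (a - b) * x m).
Proof.
apply: eq_bigr => m _; rewrite !mxE numconjE conj_expj -expjD; congr expj; ring.
Qed.

Lemma aver_cross (lam : R) (y : 'I_N -> R) (a b : R) :
  \sum_n ((a_ver lam y a) n 0)^* * (a_ver lam y b) n 0 =
  \sum_n expj ((2 * pi / lam) * (a - b) * y n).
Proof.
apply: eq_bigr => m _; rewrite !mxE numconjE conj_expj -expjD; congr expj; ring.
Qed.

Lemma sum_expj0 (n : nat) (z : 'I_n -> R) :
  \sum_(m < n) expj (0 * z m) = n%:R.
Proof.
under eq_bigr do rewrite mul0r expj0.
by rewrite sumr_const card_ord.
Qed.

End D.

Section E.
Variable R : realType.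

Lemma cs_real (n : nat) (a b c d : 'I_n -> R) :
  (\sum_i (a i * c i + b i * d i)) ^+ 2 + (\sum_i (a i * d i - b i * c i)) ^+ 2
  <= (\sum_i (a i ^+ 2 + b i ^+ 2)) * (\sum_i (c i ^+ 2 + d i ^+ 2)).
Proof.
set A := \sum_i (a i ^+ 2 + b i ^+ 2).
set B := \sum_i (c i ^+ 2 + d i ^+ 2).
set X := \sum_i (a i * c i + b i * d i).
set Y := \sum_i (a i * d i - b i * c i).
have A0 : 0 <= A by apply: sumr_ge0 => i _; rewrite addr_ge0 // sqr_ge0.
have key : 0 <= A * (A * B - (X ^+ 2 + Y ^+ 2)).
  have : 0 <= \sum_i ((A * c i - (X * a i - Y * b i)) ^+ 2 +
                      (A * d i - (X * b i + Y * a i)) ^+ 2).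
    by apply: sumr_ge0 => i _; rewrite addr_ge0 // sqr_ge0.
  have -> : \sum_i ((A * c i - (X * a i - Y * b i)) ^+ 2 +
                      (A * d i - (X * b i + Y * a i)) ^+ 2) =
     \sum_i (A ^+ 2 * (c i ^+ 2 + d i ^+ 2) + (- (2 * A * X)) * (a i * c i + b i * d i)
             + (- (2 * A * Y)) * (a i * d i - b i * c i) + (X ^+ 2 + Y ^+ 2) * (a i ^+ 2 + b i ^+ 2)).
    by apply: eq_bigr => i _; ring.
  rewrite !big_split /= -!mulr_sumr -/A -/B -/X -/Y.
  suff -> : A ^+ 2 * B + - (2 * A * X) * X + - (2 * A * Y) * Y + (X ^+ 2 + Y ^+ 2) * A =
            A * (A * B - (X ^+ 2 + Y ^+ 2)) by [].
  ring.
have [Az|Ap] := eqVneq A 0.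
  have h0 : forall i, a i = 0 /\ b i = 0.
    move=> i; have /psumr_eq0P H : A = 0 by [].
    have := H (fun j _ => addr_ge0 (sqr_ge0 _) (sqr_ge0 _)) i isT.
    move=> /eqP; rewrite paddr_eq0 ?sqr_ge0 // !sqrf_eq0 => /andP[/eqP -> /eqP ->] //.
  have -> : X = 0 by rewrite /X big1 // => i _; have [-> ->] := h0 i; ring.
  have -> : Y = 0 by rewrite /Y big1 // => i _; have [-> ->] := h0 i; ring.
  by rewrite Az expr0n /= addr0 mul0r.
have Apos : 0 < A by rewrite lt_def Ap A0.
by rewrite pmulr_rge0 // subr_ge0 in key.
Qed.

Lemma cs_herm (M N : nat) (w h : 'cV[R[i]]_(M * N)) :
  cabs2 (herm_ip w h) <= norm2sq w * norm2sq h.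
Proof.
have eRe : complex.Re (herm_ip w h) = \sum_i (complex.Re (w i 0) * complex.Re (h i 0)
             + complex.Im (w i 0) * complex.Im (h i 0)).
  rewrite /herm_ip Re_sum; apply: eq_bigr => i _; rewrite numconjE.
  by case: (w i 0) => a b; case: (h i 0) => c d; simpc.
have eIm : complex.Im (herm_ip w h) = \sum_i (complex.Re (w i 0) * complex.Im (h i 0)
             - complex.Im (w i 0) * complex.Re (h i 0)).
  rewrite /herm_ip Im_sum; apply: eq_bigr => i _; rewrite numconjE.
  by case: (w i 0) => a b; case: (h i 0) => c d; simpc => /=; ring.
rewrite /cabs2 eRe eIm /norm2sq /cabs2; exact: cs_real.
Qed.

Lemma slot_zero (lam : R) (f t : nat) (Dl dl : R) : 0 < lam -> (2 <= f)%N ->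
  Dl != 0 -> (dl = Dl \/ dl = - Dl) ->
  slot ((2 * pi / lam) * dl) f (lam / (f%:R * `|Dl|) * (1 + f * t)%N%:R) = 0.
Proof.
move=> lam0 f2 D0 hdl.
have fpos : (0 : R) < f%:R by rewrite ltr0n; case: f f2.
have a0 : 0 < `|Dl| by rewrite normr_gt0.
set e := dl / `|Dl|.
have he : e = 1 \/ e = -1.
  rewrite /e; case: (ltgtP Dl 0) => [Dn|Dp|Dz]; last by rewrite Dz eqxx in D0.
    rewrite ltr0_norm //; case: hdl => ->; [right|left]; field; exact: D0.
  rewrite gtr0_norm //; case: hdl => ->; [left|right]; field; exact: D0.
rewrite -(@geo0 R f t e f2 he) /slot big_mkord; apply: eq_bigr => i _; congr expj.
rewrite /e; field; rewrite ?gt_eqF //.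
Qed.

End E.
Section F.

Lemma prod_nseq_nat (k p : nat) : \prod_(x <- nseq k p) x = (p ^ k)%N.
Proof. by elim: k => [|k IH]; rewrite ?big_nil ?expn0 // big_cons IH expnS. Qed.

Lemma factors n : (0 < n)%N -> exists fs : seq nat,
  [/\ (\prod_(x <- fs) x)%N = n, size fs = bigomega n &
      forall x, x \in fs -> (2 <= x)%N].
Proof.
move=> n0; exists (flatten [seq nseq (logn p n) p | p <- primes n]); split.
- rewrite big_flatten /= big_map.
  under eq_bigr do rewrite prod_nseq_nat.
  by rewrite [RHS]prod_prime_decomp // prime_decompE big_map.
- rewrite size_flatten /shape -map_comp sumnE big_map /bigomega.
  by apply: eq_bigr => p _ /=; rewrite size_nseq.
move=> x /flattenP [s /mapP [p pn ->]]; rewrite mem_nseq => /andP[_ /eqP ->].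
by move: pn; rewrite mem_primes => /andP[/prime_gt1 ].
Qed.

Definition pairs (K : nat) : seq (nat * nat) :=
  flatten [seq [seq (i, j) | i <- iota 0 j] | j <- iota 0 K].

Lemma size_pairs K : size (pairs K) = ((K * (K - 1)) %/ 2)%N.
Proof.
rewrite /pairs size_flatten /shape -map_comp sumnE big_map.
under eq_bigr do rewrite /= size_map size_iota.
by have := bin2_sum K; rewrite /index_iota subn0 => ->; rewrite bin2 divn2 subn1.
Qed.

Lemma mem_pairs K i j : ((i, j) \in pairs K) = (i < j < K)%N.
Proof.
apply/flattenP/idP => [[s /mapP [j' j'K ->]] /mapP [i' i'j [-> ->]]|/andP[ij jK]].
  by move: j'K i'j; rewrite !mem_iota /= !add0n => -> ->.
exists [seq (i', j) | i' <- iota 0 j]; first by apply/mapP; exists j; rewrite // mem_iota.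
by apply/mapP; exists i; rewrite // mem_iota.
Qed.

End F.
Section G.
Variable R : realType.

Lemma array_exists (lam dmin : R) (fs : seq nat) (Dfun : nat -> R) (P : nat) :
  0 < lam -> 0 < dmin -> (\prod_(x <- fs) x)%N = P ->
  (forall x, x \in fs -> (2 <= x)%N) ->
  (forall l, (l < size fs)%N -> Dfun l != 0) ->
  exists z : nat -> R,
    (forall m, (m.+1 < P)%N -> dmin <= z m.+1 - z m) /\
    (forall l, (l < size fs)%N -> forall dl, (dl = Dfun l \/ dl = - Dfun l) ->
       \sum_(m < P) expj ((2 * pi / lam) * dl * z m) = 0).
Proof.
move=> lam0 dmin0 hprod hge hD.
set ds := [seq Dfun l | l <- iota 0 (size fs)].
have szE : size ds = size fs by rewrite size_map size_iota.
set inp := zip fs ds.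
have szI : size inp = size fs by rewrite size_zip szE minnn.
have nthI : forall l, (l < size fs)%N -> nth (0%N, 0) inp l = (nth 0%N fs l, Dfun l).
  by move=> l hl; rewrite nth_zip // (nth_map 0%N) ?size_iota // nth_iota.
have valid : forall p, p \in inp -> (0 < p.1)%N /\ p.2 != 0.
  move=> p /(nthP (0%N, 0)) [l]; rewrite szI => hl <-; rewrite nthI //=.
  split; last exact: hD.
  by apply: leq_trans (hge _ (mem_nth 0%N hl)).
have [s [hmap hmem hgap]] := @build R lam dmin inp lam0 dmin0 valid.
have hfst : map fst s = fs by rewrite hmap; apply: unzip1_zip; rewrite szE.
have hP : prodf s = P by rewrite prodf_map hfst.
have pos1 : forall p, p \in s -> (0 < p.1)%N.
  move=> p ps; have : p.1 \in fs by rewrite -hfst map_f.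
  by move/hge; apply: leq_trans.
exists (pos s); split.
  by move=> m; rewrite -hP; exact: hgap.
move=> l hl dl hdl.
have hin : (nth 0%N fs l, Dfun l) \in inp by rewrite -nthI // mem_nth // szI.
have [t ht] := hmem _ hin.
have -> : \sum_(m < P) expj (2 * pi / lam * dl * pos s m) = asum (2 * pi / lam * dl) s.
  by rewrite /asum hP big_mkord.
apply: (@asum0 R _ s _ _ pos1 ht) => /=.
apply: slot_zero => //; first exact: hge (mem_nth 0%N hl).
exact: hD.
Qed.

End G.
Lemma natC (R : realType) (n : nat) : ((n%:R : R)%:C) = n%:R :> R[i].
Proof. by elim: n => // n IH; rewrite !mulrS raddfD /= IH. Qed.

Section H.
Variable R : realType.
Variables (M N K : nat).
Variables (lam : R) (b : 'I_K -> R[i]) (th ph : 'I_K -> R) (x : 'I_M -> R) (y : 'I_N -> R).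

Lemma chan_ip k q :
  herm_ip (chan lam b th ph x y k) (chan lam b th ph x y q) =
  conjc (b k) * b q * ((\sum_m expj ((2 * pi / lam) * (th k - th q) * x m)) *
                  (\sum_n expj ((2 * pi / lam) * (ph k - ph q) * y n))).
Proof. by rewrite /chan herm_ipZ kron_ip ahor_cross aver_cross. Qed.

Lemma chan_ip_self k :
  herm_ip (chan lam b th ph x y k) (chan lam b th ph x y k) =
  (cabs2 (b k) * (M * N)%:R)%:C.
Proof.
rewrite chan_ip !subrr !mulr0 !sum_expj0 conj_mul_self.
by rewrite rmorphM /= natC natrM.
Qed.

Lemma norm_chan k : norm2sq (chan lam b th ph x y k) = cabs2 (b k) * (M * N)%:R.
Proof.
by have := chan_ip_self k; rewrite ip_self => /(congr1 (@complex.Re R)).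
Qed.

End H.

Lemma cabs2_gt0 (R : realType) (z : R[i]) : z != 0 -> 0 < cabs2 z.
Proof.
move=> nz; rewrite lt_def cabs2_ge0 andbT; apply: contra nz.
case: z => a c; rewrite /cabs2 /= paddr_eq0 ?sqr_ge0 // !sqrf_eq0.
by case/andP => /eqP -> /eqP ->.
Qed.
Lemma cabs20 (R : realType) : cabs2 (0 : R[i]) = 0.
Proof. by rewrite /cabs2 /= expr0n /= addr0. Qed.

Lemma two_pow_ge1 (R : realType) (r : R) : 0 <= r -> 1 <= 2 `^ r.
Proof.
move=> r0; rewrite /powR ifF; last by apply/negbTE; rewrite pnatr_eq0.
by apply: le_trans (expR_ge1Dx _); rewrite lerDl mulr_ge0 // ln_ge0 // ler1n.
Qed.

Lemma lower (R : realType) (M N K : nat) (lam sigma2 dminx dminy : R)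
  (b : 'I_K -> R[i]) (th ph r : 'I_K -> R) (x : 'I_M -> R) (y : 'I_N -> R)
  (W : 'M[R[i]]_(M * N, K)) (p : 'I_K -> R) (k : 'I_K) :
  0 < sigma2 -> (0 < M)%N -> (0 < N)%N -> b k != 0 ->
  feasible lam sigma2 dminx dminy b th ph r x y W p -> pbar M N sigma2 b r k <= p k.
Proof.
move=> s0 M0 N0 bk [hlog hp _ _].
set hh := chan lam b th ph x y.
set w := col k W.
set B := cabs2 (b k) * (M * N)%:R.
have B0 : 0 < B by rewrite mulr_gt0 ?cabs2_gt0 // ltr0n muln_gt0 M0 N0.
have hB : norm2sq (hh k) = B by exact: norm_chan.
set A := norm2sq w.
have A0 : 0 <= A by apply: sumr_ge0 => i _; exact: cabs2_ge0.
set C := cabs2 (herm_ip w (hh k)).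
have C0 : 0 <= C by exact: cabs2_ge0.
have hC : C <= A * B by rewrite -hB; exact: cs_herm.
set I := \sum_(q < K | q != k) cabs2 (herm_ip w (hh q)) * p q.
have I0 : 0 <= I by apply: sumr_ge0 => q _; rewrite mulr_ge0 ?cabs2_ge0.
have pk0 := hp k.
set s := sinr lam sigma2 b th ph x y W p k.
have sE : s = C * p k / (I + A * sigma2) by rewrite /s /sinr.

have s0' : 0 <= s.
  rewrite sE divr_ge0 ?mulr_ge0 // addr_ge0 // mulr_ge0 // ltW //.

have key : s * sigma2 <= B * p k.
  have [Az|Ap] := eqVneq A 0.
    have Cz : C = 0 by apply/eqP; rewrite eq_le C0 andbT; move: hC; rewrite Az mul0r.
    by rewrite sE Cz !mul0r mulr_ge0 // ltW.
  have Apos : 0 < A by rewrite lt_def Ap A0.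
  have Dn : 0 < I + A * sigma2 by rewrite ltr_wpDl // mulr_gt0.
  rewrite sE mulrAC ler_pdivrMr //.
  have h1 : C * (p k * sigma2) <= (A * B) * (p k * sigma2) by rewrite ler_wpM2r // mulr_ge0 // ltW.
  have h2 : B * p k * (A * sigma2) <= B * p k * (I + A * sigma2).
    rewrite ler_wpM2l ?mulr_ge0 ?(ltW B0) ?cabs2_ge0 //; lra.
  nra.
have h2 : 2 `^ r k <= 1 + s.
  have ln2 : 0 < ln (2 : R) by rewrite ln_gt0 // ltr1n.
  have -> : (2 : R) `^ r k = expR (r k * ln 2).
    by rewrite /powR ifF //; apply/negbTE; rewrite pnatr_eq0.
  have := hlog k; rewrite /log2 -/s ler_pdivlMr // => h.
  rewrite -[X in _ <= X](@lnK _ (1 + s)); last by rewrite posrE; lra.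
  by rewrite ler_expR.
rewrite /pbar ler_pdivrMr; last by rewrite mulr_gt0 ?cabs2_gt0 // ltr0n muln_gt0 M0 N0.
rewrite [_ * cabs2 _]mulrC -/B; nra.
Qed.
Lemma lift_ne (R : realType) (K : nat) (g : 'I_K -> R)
  (Hg : forall k q, k != q -> g k != g q) (i j : nat) : (i < j < K)%N ->
  oapp g 0 (insub i : option 'I_K) - oapp g 0 (insub j : option 'I_K) != 0.
Proof.
move=> /andP[ij jK]; have iK : (i < K)%N by apply: ltn_trans jK.
have -> : (insub i : option 'I_K) = Some (Ordinal iK) by exact: (valK (Ordinal iK)).
have -> : (insub j : option 'I_K) = Some (Ordinal jK) by exact: (valK (Ordinal jK)).
rewrite /= subr_eq0; apply: Hg.
by apply/eqP => /(congr1 val) /= ji; move: ij; rewrite ji ltnn.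
Qed.

Lemma lift_val (R : realType) (K : nat) (g : 'I_K -> R) (k : 'I_K) :
  oapp g 0 (insub (val k) : option 'I_K) = g k.
Proof. by rewrite valK. Qed.

Local Close Scope complex_scope.

Theorem theorem2 (R : realType) (M N K : nat)
  (lambda sigma2 dminx dminy : R) (b : 'I_K -> R[i]) (th ph r : 'I_K -> R) :
  (0 < M)%N -> (0 < N)%N ->
  0 < lambda -> 0 < sigma2 -> 0 < dminx -> 0 < dminy ->
  (forall k, b k != 0) ->
  (forall k, -1 <= th k <= 1) -> (forall k, -1 <= ph k <= 1) ->
  (forall k q, k != q -> th k != th q) ->
  (forall k q, k != q -> ph k != ph q) ->
  (forall k, 0 <= r k) ->
  (K * (K - 1) %/ 2 <= bigomega M + bigomega N)%N ->
  (exists (x : 'I_M -> R) (y : 'I_N -> R) (W : 'M[R[i]]_(M * N, K))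
          (p : 'I_K -> R),
      feasible lambda sigma2 dminx dminy b th ph r x y W p /\
      forall k, p k = pbar M N sigma2 b r k)
  /\
  (forall (x : 'I_M -> R) (y : 'I_N -> R) (W : 'M[R[i]]_(M * N, K))
          (p : 'I_K -> R),
      feasible lambda sigma2 dminx dminy b th ph r x y W p ->
      \sum_k pbar M N sigma2 b r k <= \sum_k p k).
Proof.
move=> HM HN Hl Hs Hdx Hdy Hb Hth Hph Hthd Hphd Hr Hcount.
split; last first.
  by move=> x y W p hf; apply: ler_sum => k _; exact: (@lower R M N K lambda sigma2 dminx dminy b th ph r x y W p k Hs HM HN (Hb k) hf).
have [fsM [prodM sizeM geM]] := @factors M HM.
have [fsN [prodN sizeN geN]] := @factors N HN.
set ps := pairs K.
have hsz : (size ps <= size fsM + size fsN)%N by rewrite size_pairs sizeM sizeN.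
set thn := fun i : nat => oapp th 0 (insub i : option 'I_K).
set phn := fun i : nat => oapp ph 0 (insub i : option 'I_K).
have psP : forall l, (l < size ps)%N ->
    ((nth (0, 0) ps l).1 < (nth (0, 0) ps l).2 < K)%N.
  by move=> l hl; have := mem_nth (0, 0)%N hl; case: nth => i j; rewrite mem_pairs.
set dX := fun l => if (l < size ps)%N then thn (nth (0, 0) ps l).1 - thn (nth (0, 0) ps l).2 else 1.
set dY := fun l => if (l + size fsM < size ps)%N then
   phn (nth (0, 0) ps (l + size fsM)).1 - phn (nth (0, 0) ps (l + size fsM)).2 else 1.
have dX0 : forall l, (l < size fsM)%N -> dX l != 0.
  move=> l _; rewrite /dX; case: ifP => hl; last exact: oner_neq0.
  exact: (@lift_ne R K th Hthd _ _ (psP l hl)).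
have dY0 : forall l, (l < size fsN)%N -> dY l != 0.
  move=> l _; rewrite /dY; case: ifP => hl; last exact: oner_neq0.
  exact: (@lift_ne R K ph Hphd _ _ (psP _ hl)).
have [zX [gapX orthX]] := @array_exists R lambda dminx fsM dX M Hl Hdx prodM geM dX0.
have [zY [gapY orthY]] := @array_exists R lambda dminy fsN dY N Hl Hdy prodN geN dY0.
pose x := fun m : 'I_M => zX m.
pose y := fun n : 'I_N => zY n.
set hh := chan lambda b th ph x y.
pose W := \matrix_(i < M * N, q < K) hh q i 0.
have colW : forall k, col k W = hh k by move=> k; apply/colP => i; rewrite !mxE.
have ortho : forall k q, k != q -> herm_ip (hh k) (hh q) = 0.
  have main : forall k q (i j : 'I_K), (i < j)%N ->
      (th k - th q = th i - th j \/ th k - th q = - (th i - th j)) ->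
      (ph k - ph q = ph i - ph j \/ ph k - ph q = - (ph i - ph j)) ->
      herm_ip (hh k) (hh q) = 0.
    move=> k q i j ij eth eph.
    have hin : ((val i, val j) \in ps) by rewrite mem_pairs ij ltn_ord.
    set l := index (val i, val j) ps.
    have hl : (l < size ps)%N by rewrite index_mem.
    have hnth : nth (0, 0)%N ps l = (val i, val j) by rewrite nth_index.
    rewrite /hh chan_ip.
    case: (ltnP l (size fsM)) => hlM.
      have -> : \sum_m expj (2 * pi / lambda * (th k - th q) * x m) = 0.
        apply: (orthX l hlM); rewrite /dX hl hnth /= /thn !lift_val //.
      by rewrite mul0r mulr0.
    have hl' : (l - size fsM < size fsN)%N.
      by rewrite ltn_subLR // (leq_trans hl hsz).
    have -> : \sum_n expj (2 * pi / lambda * (ph k - ph q) * y n) = 0.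
      apply: (orthY _ hl'); rewrite /dY subnK // hl hnth /= /phn !lift_val //.
    by rewrite mulr0 mulr0.
  move=> k q kq; case: (ltngtP k q) => hkq.
  - by apply: (main k q k q hkq); left.
  - by apply: (main k q q k hkq); right; rewrite opprB.
  - by move: kq; rewrite (val_inj hkq) eqxx.
have MN0 : (0 < M * N)%N by rewrite muln_gt0 HM HN.
exists x, y, W, (pbar M N sigma2 b r); split => //; split.
- move=> k.
  have sE : sinr lambda sigma2 b th ph x y W (pbar M N sigma2 b r) k = 2 `^ r k - 1.
    rewrite /sinr /= colW -/hh.
    rewrite big1; last by move=> q hq; rewrite ortho 1?eq_sym // cabs20 mul0r.
    rewrite chan_ip_self norm_chan cabs2_real add0r /pbar.
    have cb0 : cabs2 (b k) != 0 by rewrite gt_eqF // cabs2_gt0.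
    have mn0 : (M * N)%:R != 0 :> R by rewrite pnatr_eq0 -lt0n.
    by field; rewrite cb0 gt_eqF // !pnatr_eq0 -!lt0n HM HN.
  have ln2 : 0 < ln (2 : R) by rewrite ln_gt0 // ltr1n.
  by rewrite sE addrC subrK /log2 ln_powR mulfK ?gt_eqF.
- move=> k; rewrite /pbar divr_ge0 ?mulr_ge0 ?cabs2_ge0 // ?(ltW Hs) //.
  by rewrite subr_ge0 two_pow_ge1.
- by move=> m hm; exact: (gapX m hm).
- by move=> n hn; exact: (gapY n hn).
Qed.
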